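(* Let $k:\mathbb{N}\to\mathbb{N}$ satisfy $k(n)\to\infty$ as $n\to\infty$ and $k(n)=o(\sqrt{n})$. Then $$g(n,K_3,S_{k(n)+1})\ge (1+o(1))\frac{n\,k(n)^2}{48}.$$
   Context: Constructor-Blocker game: given graphs $H$ and $F$, two players, Constructor and Blocker, alternately claim previously unclaimed edges of the complete graph $K_n$, Constructor moving first. Constructor may only claim an edge if her graph (the edges she has claimed) remains $F$-free (contains no subgraph isomorphic to $F$); Blocker may claim any unclaimed edge. The game ends when Constructor cannot claim any more edges or all edges are claimed. The score is the number of copies of $H$ in Constructor's graph at the end. Constructor maximizes, Blocker minimizes; $g(n,H,F)$ denotes the score under optimal play by both. $S_k$ denotes the star with $k$ leaves (so being $S_{k+1}$-free means maximum degree at most $k$). *)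

(* Defs.v *)
From mathcomp Require Import all_boot.
Set Implicit Arguments. Unset Strict Implicit. Unset Printing Implicit Defensive.

(* Vertices of K_n are 'I_n; an edge is a 2-element vertex set. *)
Definition Kedges (n : nat) : {set {set 'I_n}} :=
  [set e : {set 'I_n} | #|e| == 2].

(* A graph on [n] is given by its edge set G \subset Kedges n. *)
Definition deg n (G : {set {set 'I_n}}) (v : 'I_n) : nat :=
  #|[set e in G | v \in e]|.

Definition has_star n (k : nat) (G : {set {set 'I_n}}) : bool :=
  [exists v : 'I_n, [exists L : {set 'I_n},
     [&& #|L| == k.+1, v \notin L & [forall u in L, [set v; u] \in G]]]].

Definition star_free n k (G : {set {set 'I_n}}) : bool := ~~ has_star k G.

Definition ntri n (G : {set {set 'I_n}}) : nat :=
  #|[set T : {set 'I_n} | (#|T| == 3) &&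
     [forall e : {set 'I_n}, ((e \subset T) && (#|e| == 2)) ==> (e \in G)]]|.

(* Value of the Constructor-Blocker game from the position where Constructor
   owns C, Blocker owns B, [constr] says whether Constructor is to move, and
   [fuel] bounds the number of remaining moves (we start with fuel equal to the
   number of edges of K_n, which always equals the number of unclaimed edges). *)
Fixpoint gval n (k : nat) (fuel : nat) (constr : bool)
    (C B : {set {set 'I_n}}) : nat :=
  match fuel with
  | 0 => ntri C
  | fuel'.+1 =>
    let U := [set e in Kedges n | (e \notin C) && (e \notin B)] in
    if constr then
      let L := [set e in U | star_free k (e |: C)] in
      if L == set0 then ntri C
      else \max_(e in L) gval k fuel' false (e |: C) B
    else
      if U == set0 then ntri C
      else \big[minn/#|[set: {set 'I_n}]|]_(e in U) gval k fuel' true C (e |: B)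
  end.

Definition g_K3_star (n k : nat) : nat :=
  @gval n k #|Kedges n| true set0 set0.

(* Main.v *)
Require Import Defs.
From mathcomp Require Import all_boot.
From mathcomp Require Import zify.
From Stdlib Require Import Lia.
Set Implicit Arguments. Unset Strict Implicit. Unset Printing Implicit Defensive.

Section Game.
Variables (n k : nat).
Local Notation m := k.+1.
Local Notation E := {set 'I_n}.

Definition blk (x : 'I_n) : nat := x %/ m.
Definition samebl (A : E) := [forall x in A, forall y in A, blk x == blk y].
Definition P : {set E} := [set e : E | (#|e| == 2) && samebl e].
Definition Tr : {set E} := [set T : E | (#|T| == 3) && samebl T].
Definition cnt (C : {set E}) (T : E) := #|[set x in C | x \subset T]|.
Definition alive (B : {set E}) (T : E) := [forall x in B, ~~ (x \subset T)].
Definition Phi C B := \sum_(T | (T \in Tr) && alive B T) 2 ^ cnt C T.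
Definition w C B (f : E) := \sum_(T | [&& T \in Tr, alive B T & f \subset T]) 2 ^ cnt C T.
Definition Un (A : {set E}) (C B : {set E}) := [set x in A | (x \notin C) && (x \notin B)].

Lemma samebl_sub (A A' : E) : A \subset A' -> samebl A' -> samebl A.
Proof.
move=> sA /forall_inP H; apply/forall_inP=> x xA; apply/forall_inP=> y yA.
by move/forall_inP: (H x (subsetP sA x xA)) => /(_ y (subsetP sA y yA)).
Qed.

Lemma P_Kedges : P \subset Kedges n.
Proof. by apply/subsetP=> e; rewrite !inE => /andP[]. Qed.

Lemma sub_Tr_P (T f : E) : T \in Tr -> f \subset T -> #|f| = 2 -> f \in P.
Proof.
rewrite !inE => /andP[_ sT] fT cf; rewrite cf eqxx /=.
exact: samebl_sub fT sT.
Qed.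

Lemma blk_card q : #|[set u : 'I_n | blk u == q]| <= m.
Proof.
pose f (u : 'I_n) : 'I_m := Ordinal (ltn_pmod u (ltn0Sn k)).
rewrite -(card_in_imset (f := f)); first by rewrite -[X in _ <= X]card_ord max_card.
move=> u v; rewrite !inE /blk => /eqP Hu /eqP Hv /(congr1 val) /= Huv.
by apply: val_inj; rewrite /= (divn_eq u m) (divn_eq v m) Hu Hv Huv.
Qed.

Lemma star_free_sub (G : {set E}) : G \subset P -> star_free k G.
Proof.
move=> GP; apply/negP => /existsP[v /existsP[L /and3P[/eqP cL vL /forall_inP HL]]].
have : v |: L \subset [set u : 'I_n | blk u == blk v].
  apply/subsetP=> u; rewrite !inE => /orP[/eqP->//|uL].
  have := subsetP GP _ (HL u uL); rewrite inE => /andP[_ /forall_inP Hs].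
  have := Hs u; rewrite !inE eqxx orbT => /(_ isT) /forall_inP /(_ v).
  by rewrite !inE eqxx => /(_ isT) /eqP->.
move/subset_leq_card; rewrite cardsU1 vL cL => H.
by have := leq_trans H (blk_card (blk v)); rewrite ltnn.
Qed.


Lemma draws_sub (C : {set E}) (T : E) : C \subset P ->
  [set x in C | x \subset T] \subset [set x : E | x \subset T & #|x| == 2].
Proof.
move=> CP; apply/subsetP=> x; rewrite !inE => /andP[xC ->] /=.
by have := subsetP CP x xC; rewrite inE => /andP[].
Qed.

Lemma cnt_le3 (C : {set E}) (T : E) : C \subset P -> #|T| = 3 -> cnt C T <= 3.
Proof.
move=> CP cT; rewrite /cnt; apply: leq_trans (subset_leq_card (draws_sub T CP)) _.
by rewrite cards_draws cT.
Qed.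

Lemma cnt_le1 (C : {set E}) (T e f : E) : C \subset P -> #|T| = 3 -> e \subset T -> f \subset T ->
  #|e| = 2 -> #|f| = 2 -> e != f -> e \notin C -> f \notin C -> cnt C T <= 1.
Proof.
move=> CP cT eT fT ce cf ef eC fC.
set D := [set x : E | x \subset T & #|x| == 2].
have sub : [set x in C | x \subset T] \subset D :\: [set e; f].
  apply/subsetP=> x xs; rewrite inE (subsetP (draws_sub T CP) x xs) andbT.
  move: xs; rewrite !inE => /andP[xC _]; apply/negP=> /orP[] /eqP xe.
    by rewrite -xe xC in eC.
  by rewrite -xe xC in fC.
apply: leq_trans (subset_leq_card sub) _.
have efD : [set e; f] \subset D by apply/subsetP=> x; rewrite !inE => /orP[]/eqP->; rewrite ?eT ?fT ?ce ?cf.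
by rewrite cardsD (setIidPr efD) cards_draws cT cards2 ef.
Qed.

Lemma T_unique (T e f : E) : #|T| = 3 -> e \subset T -> f \subset T ->
  #|e| = 2 -> #|f| = 2 -> e != f -> T = e :|: f.
Proof.
move=> cT eT fT ce cf ef; apply/eqP; rewrite eq_sym eqEcard subUset eT fT /= cT.
rewrite cardsU ce cf.
have : #|e :&: f| <= 1.
  rewrite leqNgt; apply/negP=> H.
  have Hie : e :&: f = e.
    apply/eqP; rewrite eqEcard subsetIl ce; exact: H.
  have Hif : e :&: f = f.
    apply/eqP; rewrite eqEcard subsetIr cf; exact: H.
  by move: ef; rewrite -{1}Hie Hif eqxx.
by case: #|e :&: f| => [|[]].
Qed.

Lemma cntU (C : {set E}) (e T : E) : e \notin C -> cnt (e |: C) T = cnt C T + (e \subset T).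
Proof.
move=> eC; rewrite /cnt; case eT: (e \subset T).
  have -> : [set x in e |: C | x \subset T] = e |: [set x in C | x \subset T].
    by apply/setP=> x; rewrite !inE; case: eqP => [->|]; rewrite ?eT.
  by rewrite cardsU1 !inE (negbTE eC) addnC.
have -> : [set x in e |: C | x \subset T] = [set x in C | x \subset T].
  by apply/setP=> x; rewrite !inE; case: eqP => [->|]; rewrite ?eT ?(negbTE eC).
by rewrite addn0.
Qed.

Lemma Phi_addC (C B : {set E}) (e : E) : e \notin C -> Phi (e |: C) B = Phi C B + w C B e.
Proof.
move=> eC; rewrite /Phi /w (bigID (fun T : E => e \subset T)) /=.
rewrite [X in _ = X + _](bigID (fun T : E => e \subset T)) /=.
have H1 : \sum_(T | (T \in Tr) && alive B T && (e \subset T)) 2 ^ cnt (e |: C) T =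
   \sum_(T | (T \in Tr) && alive B T && (e \subset T)) 2 ^ cnt C T +
   \sum_(T | (T \in Tr) && alive B T && (e \subset T)) 2 ^ cnt C T.
  rewrite -big_split /=.
  by apply: eq_bigr => T /andP[_ eT]; rewrite cntU // eT addn1 expnS mul2n -addnn.
have H0 : \sum_(T | [&& T \in Tr, alive B T & e \subset T]) 2 ^ cnt C T =
   \sum_(T | (T \in Tr) && alive B T && (e \subset T)) 2 ^ cnt C T.
  by apply: eq_bigl => T; rewrite andbA.
have H2 : \sum_(T | (T \in Tr) && alive B T && ~~ (e \subset T)) 2 ^ cnt (e |: C) T =
   \sum_(T | (T \in Tr) && alive B T && ~~ (e \subset T)) 2 ^ cnt C T.
  by apply: eq_bigr => T /andP[_ /negbTE eT]; rewrite cntU // eT addn0.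
by rewrite H0 H1 H2 -!addnA [X in _ + X = _]addnC.
Qed.

Lemma aliveU (B : {set E}) (f T : E) : alive (f |: B) T = alive B T && ~~ (f \subset T).
Proof.
rewrite /alive; apply/forall_inP/andP.
  move=> H; split; last by apply: H; rewrite setU11.
  by apply/forall_inP=> x xB; apply: H; rewrite inE xB orbT.
move=> [/forall_inP H fT] x; rewrite !inE => /orP[/eqP->//|]; exact: H.
Qed.

Lemma Phi_addB (C B : {set E}) (f : E) : Phi C (f |: B) + w C B f = Phi C B.
Proof.
rewrite /Phi /w [in RHS](bigID (fun T : E => f \subset T)) /= addnC.
congr (_ + _); first by apply: eq_bigl => T; rewrite andbA.
by apply: eq_bigl => T; rewrite aliveU andbA.
Qed.

Lemma w_shift (C B : {set E}) (e f : E) : C \subset P -> #|e| = 2 -> #|f| = 2 -> e != f ->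
  e \notin C -> f \notin C -> w (e |: C) B f <= w C B f + 2.
Proof.
move=> CP ce cf ef eC fC; rewrite /w (bigID (fun T : E => e \subset T)) /=.
rewrite [X in _ <= X + _](bigID (fun T : E => e \subset T)) /=.
have H2 : \sum_(T | [&& T \in Tr, alive B T & f \subset T] && ~~ (e \subset T)) 2 ^ cnt (e |: C) T =
   \sum_(T | [&& T \in Tr, alive B T & f \subset T] && ~~ (e \subset T)) 2 ^ cnt C T.
  by apply: eq_bigr => T /andP[_ /negbTE eT]; rewrite cntU // eT addn0.
have H1 : \sum_(T | [&& T \in Tr, alive B T & f \subset T] && (e \subset T)) 2 ^ cnt (e |: C) T =
   \sum_(T | [&& T \in Tr, alive B T & f \subset T] && (e \subset T)) 2 ^ cnt C T +
   \sum_(T | [&& T \in Tr, alive B T & f \subset T] && (e \subset T)) 2 ^ cnt C T.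
  rewrite -big_split /=.
  by apply: eq_bigr => T /andP[_ eT]; rewrite cntU // eT addn1 expnS mul2n -addnn.
have H3 : \sum_(T | [&& T \in Tr, alive B T & f \subset T] && (e \subset T)) 2 ^ cnt C T <= 2.
  apply: (@leq_trans (\sum_(T | T == e :|: f) 2)); last by rewrite big_pred1_eq.
  rewrite big_mkcond /= [X in _ <= X]big_mkcond /=; apply: leq_sum => T _.
  case: ifP => // /andP[/and3P[TT _ fT] eT].
  have cT : #|T| = 3 by move: TT; rewrite inE => /andP[/eqP].
  have -> : (T == e :|: f) = true by rewrite (T_unique cT eT fT ce cf ef) eqxx.
  have := cnt_le1 CP cT eT fT ce cf ef eC fC.
  by case: (cnt C T) => [|[]].
by rewrite H1 H2 -!addnA leq_add2l addnC leq_add2l.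
Qed.


Lemma Phi_le (C B S : {set E}) : C \subset P ->
  (forall T, T \in Tr -> alive B T -> T \in S) -> Phi C B <= 8 * #|S|.
Proof.
move=> CP HS; rewrite /Phi mulnC -sum_nat_const.
rewrite big_mkcond [X in _ <= X]big_mkcond /=; apply: leq_sum => T _.
case: ifP => // /andP[TT aT]; rewrite (HS T TT aT).
have cT : #|T| = 3 by move: TT; rewrite inE => /andP[/eqP].
by rewrite (@leq_pexp2l 2 _ 3) // cnt_le3.
Qed.

Lemma Phi_top (C B : {set E}) : C \subset P -> Phi C B <= 8 * #|[set: E]|.
Proof. by move=> CP; apply: Phi_le => // T; rewrite inE. Qed.

Lemma Phi_end (C B : {set E}) : C \subset P -> Un P C B = set0 -> Phi C B <= 8 * ntri C.
Proof.
move=> CP U0; apply: Phi_le => // T TT /forall_inP aT; rewrite inE.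
have cT : #|T| = 3 by move: TT; rewrite inE => /andP[/eqP].
rewrite cT eqxx /=; apply/forallP=> e; apply/implyP=> /andP[eT /eqP ce].
have eP := sub_Tr_P TT eT ce.
case eC: (e \in C) => //.
case eB: (e \in B); first by move: (aT e eB); rewrite eT.
by have := in_set0 e; rewrite -U0 /Un inE eP eC eB.
Qed.

Lemma ntri_mono (C C' : {set E}) : C \subset C' -> ntri C <= ntri C'.
Proof.
move=> sC; apply: subset_leq_card; apply/subsetP=> T; rewrite !inE => /andP[-> /forallP H].
apply/forallP=> e; apply/implyP=> He; exact: subsetP sC e (implyP (H e) He).
Qed.

Lemma ntri_top (C : {set E}) : ntri C <= #|[set: E]|.
Proof. by rewrite cardsT max_card. Qed.

Lemma gval_ge fuel b (C B : {set E}) : ntri C <= gval k fuel b C B.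
Proof.
elim: fuel b C B => [|fuel IH] b C B //=.
case: b.
  case: ifP => // /set0Pn [e eL].
  apply: leq_trans (ntri_mono (subsetUr [set e] C)) _.
  apply: leq_trans (IH false _ _) _; exact: (leq_bigmax_cond _ eL).
case: ifP => // _.
apply: (big_ind (fun x => ntri C <= x)); first exact: ntri_top.
  by move=> x y; rewrite leq_min => -> ->.
by move=> e _; apply: IH.
Qed.


Lemma gvalT fuel (C B : {set E}) : gval k fuel.+1 true C B =
  if [set e in Un (Kedges n) C B | star_free k (e |: C)] == set0 then ntri C
  else \max_(e in [set e in Un (Kedges n) C B | star_free k (e |: C)]) gval k fuel false (e |: C) B.
Proof. by []. Qed.

Lemma gvalF fuel (C B : {set E}) : gval k fuel.+1 false C B =
  if Un (Kedges n) C B == set0 then ntri C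
  else \big[minn/#|[set: E]|]_(e in Un (Kedges n) C B) gval k fuel true C (e |: B).
Proof. by []. Qed.

Lemma Un_addC (A C B : {set E}) e : Un A (e |: C) B = Un A C B :\ e.
Proof. by apply/setP=> x; rewrite !inE; case: (x == e); rewrite ?andbF ?andbT. Qed.

Lemma Un_addB (A C B : {set E}) e : Un A C (e |: B) = Un A C B :\ e.
Proof. by apply/setP=> x; rewrite !inE; case: (x == e); rewrite ?andbF ?andbT. Qed.

Lemma Un_sub (A A' C B : {set E}) : A \subset A' -> Un A C B \subset Un A' C B.
Proof. by move=> sA; apply/subsetP=> x; rewrite !inE => /andP[/(subsetP sA) -> ->]. Qed.

Lemma UnP0 (C B : {set E}) : #|Un (Kedges n) C B| = 0 -> Un P C B = set0.
Proof.
move/eqP; rewrite cards_eq0 => /eqP H; apply/eqP; rewrite -subset0 -H.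
exact: Un_sub P_Kedges.
Qed.


Lemma card_D1 (A : {set E}) e : e \in A -> #|A| = (#|A :\ e|).+1.
Proof. by move=> eA; rewrite (cardsD1 e A) eA. Qed.

Lemma main fuel : forall (C B : {set E}), C \subset P -> #|Un (Kedges n) C B| <= fuel ->
  Phi C B <= 8 * gval k fuel true C B + 2 * #|Un P C B|.
Proof.
elim/ltn_ind: fuel => fuel IH C B CP Hf.
case: (set_0Vmem (Un P C B)) => [UP0|[e0 e0UP]].
  apply: leq_trans (Phi_end CP UP0) _; apply: leq_trans (leq_addr _ _).
  by rewrite leq_mul2l gval_ge orbT.
have e0UK : e0 \in Un (Kedges n) C B := subsetP (Un_sub C B P_Kedges) e0 e0UP.
case: fuel IH Hf => [|fuel] IH Hf.
  by move: Hf; rewrite leqn0 cards_eq0 => /eqP H; rewrite H in_set0 in e0UK.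
have inL x : x \in Un P C B -> x \in [set e in Un (Kedges n) C B | star_free k (e |: C)].
  move=> xUP; rewrite inE (subsetP (Un_sub C B P_Kedges) x xUP) /=.
  apply: star_free_sub; rewrite subUset CP andbT sub1set.
  by move: xUP; rewrite inE => /andP[].
rewrite gvalT; case: ifP => [/eqP L0|_].
  by have := inL e0 e0UP; rewrite L0 in_set0.
case: (@arg_maxnP _ e0 (fun x => x \in Un P C B) (w C B) e0UP) => e eUP emax.
apply: (@leq_trans (8 * gval k fuel false (e |: C) B + 2 * #|Un P C B|)); last first.
  by rewrite leq_add2r leq_mul2l (leq_bigmax_cond _ (inL e eUP)) orbT.
have [eP eC eB] : [/\ e \in P, e \notin C & e \notin B].
  by move: eUP; rewrite inE => /and3P[].
have ce : #|e| = 2 by move: eP; rewrite inE => /andP[/eqP].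
have eUK : e \in Un (Kedges n) C B := subsetP (Un_sub C B P_Kedges) e eUP.
have CP' : e |: C \subset P by rewrite subUset sub1set eP CP.
have HPhi := Phi_addC B eC.
have HUP := card_D1 eUP; have HUK := card_D1 eUK.
rewrite -!Un_addC in HUP HUK.
case: fuel IH Hf => [|fuel] IH Hf.
  have UP0 : Un P (e |: C) B = set0 by apply: UnP0; lia.
  have := Phi_end CP' UP0; change (gval k 0 false (e |: C) B) with (ntri (e |: C)); move=> H; rewrite HPhi in H; clear -H; lia.
rewrite gvalF; case: ifP => [/eqP UK0|_].
  have UP0 : Un P (e |: C) B = set0 by apply: UnP0; rewrite UK0 cards0.
  have := Phi_end CP' UP0 => H; rewrite HPhi in H.
  clear -H; lia.
apply: (big_ind (fun x => Phi C B <= 8 * x + 2 * #|Un P C B|)).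
- have := @Phi_top C B CP; clear; lia.
- move=> x y Hx Hy /=; case: (leqP x y) => h.
    by [].
  by [].
move=> f fUK.
have [fK fC' fB] : [/\ f \in Kedges n, f \notin e |: C & f \notin B].
  by move: fUK; rewrite inE => /and3P[].
have cf : #|f| = 2 by move: fK; rewrite inE => /eqP.
have ef : e != f by apply: contraNneq fC' => <-; rewrite setU11.
have fC : f \notin C by apply: contra fC'; rewrite inE => ->; rewrite orbT.
have HUK' := card_D1 fUK; rewrite -Un_addB in HUK'.
have Hf' : #|Un (Kedges n) (e |: C) (f |: B)| <= fuel by clear -HUK' HUK Hf; lia.
have IH' := IH fuel (ltnW (ltnSn _)) (e |: C) (f |: B) CP' Hf'.
have HB := Phi_addB (e |: C) B f.
case fP: (f \in P).
  have fUP : f \in Un P (e |: C) B by rewrite inE fP fC' fB.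
  have HUP' := card_D1 fUP; rewrite -Un_addB in HUP'.
  have Hs := w_shift B CP ce cf ef eC fC.
  have Hm : w C B f <= w C B e by apply: emax; rewrite inE fP fC fB.
  clear -IH' HB HPhi Hs Hm HUP HUP'.
  set a := Phi (e |: C) B in HB HPhi; set b := Phi (e |: C) (f |: B) in IH' HB.
  set u := #|Un P (e |: C) (f |: B)| in IH' HUP'; set u' := #|Un P (e |: C) B| in HUP HUP'.
  set g := gval _ _ _ _ _ in IH' *. set wf := w (e |: C) B f in HB Hs.
  lia.
have fUP : f \notin Un P (e |: C) B by rewrite inE fP.
have HUP' := cardsD1 f (Un P (e |: C) B); rewrite (negbTE fUP) -Un_addB /= in HUP'.
have w0 : w (e |: C) B f = 0.
  apply: big_pred0 => T; apply/negP => /and3P[TT _ fT].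
  by rewrite (sub_Tr_P TT fT cf) in fP.
clear -IH' HB HPhi HUP HUP' w0.
set a := Phi (e |: C) B in HB HPhi; set b := Phi (e |: C) (f |: B) in IH' HB.
set u := #|Un P (e |: C) (f |: B)| in IH' HUP'; set u' := #|Un P (e |: C) B| in HUP HUP'.
set g := gval _ _ _ _ _ in IH' *. set wf := w (e |: C) B f in HB w0.
lia.
Qed.


Definition S q := [set u : 'I_n | blk u == q].

Lemma card_bigcup_le (I : finType) (F : I -> {set E}) :
  #|\bigcup_i F i| <= \sum_i #|F i|.
Proof.
apply: (big_ind2 (fun (A : {set E}) s => #|A| <= s)); first by rewrite cards0.
  move=> A1 s1 A2 s2 H1 H2; apply: leq_trans (leq_add H1 H2).
  exact: (leq_card_setU A1 A2).1.
by [].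
Qed.

Lemma P_card : #|P| <= n * m.
Proof.
have sub : P \subset \bigcup_(v : 'I_n) [set [set v; u] | u in S (blk v)].
  apply/subsetP=> e; rewrite inE => /andP[/cards2P [x [y [xy ->]]] /forall_inP Hs].
  apply/bigcupP; exists x => //; apply/imsetP; exists y => //.
  have := Hs y; rewrite !inE eqxx orbT => /(_ isT) /forall_inP /(_ x).
  by rewrite !inE eqxx => /(_ isT).
apply: leq_trans (subset_leq_card sub) _; apply: leq_trans (card_bigcup_le _) _.
apply: leq_trans (@leq_sum _ _ _ _ (fun _ => m) _) _.
  move=> v _; apply: leq_trans (leq_imset_card _ _) _; exact: blk_card.
by rewrite big_const_ord iter_addn_0 mulnC.
Qed.

Lemma S_card q : q < n %/ m -> #|S q| = m.
Proof.
move=> qb.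
pose f (u : 'I_n) : 'I_m := Ordinal (ltn_pmod u (ltn0Sn k)).
have inj : {in S q &, injective f}.
  move=> u v; rewrite !inE /blk => /eqP Hu /eqP Hv /(congr1 val) /= Huv.
  by apply: val_inj; rewrite /= (divn_eq u m) (divn_eq v m) Hu Hv Huv.
rewrite -(card_in_imset inj).
suff -> : [set f x | x in S q] = [set: 'I_m] by rewrite cardsT card_ord.
apply/eqP; rewrite eqEsubset subsetT /=; apply/subsetP=> a _.
have lt : q * m + a < n.
  apply: (@leq_trans (q.+1 * m)); first by rewrite mulSn addnC ltn_add2r.
  apply: leq_trans (leq_trunc_div n m); by rewrite leq_mul2r qb orbT.
apply/imsetP; exists (Ordinal lt).
  by rewrite inE /blk /= divnMDl // divn_small // addn0.
by apply: val_inj; rewrite /= modnMDl modn_small.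
Qed.

Lemma Tr_card : (n %/ m) * 'C(m, 3) <= #|Tr|.
Proof.
pose D (q : 'I_(n %/ m)) := [set T : E | T \subset S q & #|T| == 3].
have sub : \bigcup_q D q \subset Tr.
  apply/subsetP=> T /bigcupP [q _]; rewrite !inE => /andP[/subsetP sT ->] /=.
  apply/forall_inP=> x xT; apply/forall_inP=> y yT.
  by move: (sT x xT) (sT y yT); rewrite !inE => /eqP-> /eqP->.
apply: leq_trans (subset_leq_card sub).
rewrite -sum1_card (partition_disjoint_bigcup addn (fun _ => 1)).
  rewrite -[X in X * _]card_ord -sum_nat_const; apply: leq_sum => q _.
  by rewrite sum1_card cards_draws S_card.
move=> i j ij; rewrite -setI_eq0; apply/eqP/setP=> T; rewrite !inE.
apply/negP=> /andP[/andP[/subsetP si /eqP ci] /andP[/subsetP sj _]].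
have : (0 < #|T|) by rewrite ci.
case/card_gt0P=> x xT; move: (si x xT) (sj x xT); rewrite !inE => /eqP-> /eqP Hij.
by move: ij; rewrite (val_inj Hij) eqxx.
Qed.

Lemma bound_game : #|Tr| <= 8 * g_K3_star n k + 2 * #|P|.
Proof.
have := @main #|Kedges n| set0 set0 (sub0set _).
have -> : Un (Kedges n) set0 set0 = Kedges n by apply/setP=> x; rewrite !inE andbT.
have -> : Un P set0 set0 = P by apply/setP=> x; rewrite /Un !inE andbT.
move=> /(_ (leqnn _)); congr (_ <= _).
rewrite /Phi -sum1_card; apply: eq_big => T.
  have -> : alive set0 T by apply/forall_inP=> x; rewrite inE.
  by rewrite andbT.
move=> _; rewrite /cnt (_ : [set x in (set0 : {set E}) | x \subset T] = set0) ?cards0 //.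
by apply/setP=> x; rewrite !inE.
Qed.

End Game.

From Stdlib Require Import Reals Lra Psatz.

Lemma bin3 j : 'C(j.+2, 3) * 6 = j.+2 * j.+1 * j.
Proof. by rewrite (bin_ffact j.+2 3) !ffactnS ffactn0 /= muln1 mulnA. Qed.

Lemma nat_bound n j :
  n * (j.+1 * j) <= 48 * g_K3_star n j.+1 + 12 * (n * j.+2) + j.+1 * (j.+1 * j).
Proof.
have H1 := bound_game n j.+1.
have H2 := P_card n j.+1.
have H3 := Tr_card n j.+1.
have H4 := bin3 j.
have H5 : n <= n %/ j.+2 * j.+2 + j.+1.
  by rewrite {1}(divn_eq n j.+2) leq_add2l -ltnS ltn_pmod.
have H6 := leq_mul H5 (leqnn (j.+1 * j)).
rewrite mulnDl in H6.
have H7 : n %/ j.+2 * j.+2 * (j.+1 * j) = n %/ j.+2 * ('C(j.+2, 3) * 6).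
  by rewrite H4 !mulnA.
move: H1 H2 H3 H6 H7.
set g := g_K3_star _ _; set t := #|_|; set p := #|_|; set b := n %/ _; set c := 'C(_, _).
set X := b * _ * _. set Y := j.+1 * j.
nia.
Qed.


Lemma nat_bound' n j a b : a = 48 -> b = 12 ->
  n * (j.+1 * j) <= a * g_K3_star n j.+1 + b * (n * j.+2) + j.+1 * (j.+1 * j).
Proof. move=> -> ->; exact: nat_bound. Qed.

Lemma real_bound' n j a b : a = 48 -> b = 12 ->
  (INR n * (INR j.+1 * INR j) <= INR a * INR (g_K3_star n j.+1) + INR b * (INR n * INR j.+2) + INR j.+1 * (INR j.+1 * INR j))%R.
Proof.
move=> ha hb; have := @nat_bound' n j a b ha hb.
move/leP => /le_INR.
rewrite -!multE -!plusE !mult_INR !plus_INR !mult_INR => H; rewrite !S_INR in H *; nra.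
Qed.

Lemma real_bound n j :
  (INR n * (INR j.+1 * INR j) <= 48 * INR (g_K3_star n j.+1) + 12 * (INR n * INR j.+2) + INR j.+1 * (INR j.+1 * INR j))%R.
Proof.
have := @real_bound' n j 48 12 erefl erefl.
have e48 : INR 48 = 48%R by rewrite INR_IZR_INZ.
have e12 : INR 12 = 12%R by rewrite INR_IZR_INZ.
by rewrite e48 e12.
Qed.

Theorem theorem1p5 (k : nat -> nat)
  (k_inf : forall M : nat, exists N : nat, forall n : nat, (N <= n)%N -> (M <= k n)%N)
  (k_small : forall eps : R, (0 < eps)%R ->
     exists N : nat, forall n : nat, (N <= n)%N ->
       (INR (k n) <= eps * sqrt (INR n))%R) :
  forall eps : R, (0 < eps)%R ->
    exists N : nat, forall n : nat, (N <= n)%N ->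
      ((1 - eps) * INR n * INR (k n) ^ 2 / 48 <= INR (g_K3_star n (k n)))%R.
Proof.
move=> eps epos.
have [M HM] := INR_unbounded (50 / eps).
have [N1 HN1] := k_inf M.+1.
have [N2 HN2] := k_small (eps / 2)%R ltac:(lra).
exists (maxn (maxn N1 N2) 1) => n Hn.
have h1 : (N1 <= n)%N by apply: leq_trans Hn; rewrite !leq_max leqnn.
have h2 : (N2 <= n)%N by apply: leq_trans Hn; rewrite !leq_max leqnn !orbT.
have h3 : (1 <= n)%N by apply: leq_trans Hn; rewrite leq_max leqnn orbT.
have Kb := HN1 n h1; have Ks := HN2 n h2.
case Ek: (k n) Kb Ks => [|j] // Kb Ks.
have Hb := real_bound n j.
have KM : (INR M <= INR j.+1)%R by apply: le_INR; apply/leP; apply: ltnW.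
have Nge1 : (1 <= INR n)%R by have := le_INR 1 n (elimT leP h3).
set N := INR n in Hb Ks Nge1 *.
set K := INR j.+1 in Hb Ks KM *.
set G := INR (g_K3_star _ _) in Hb *.
have Ej : INR j = (K - 1)%R by rewrite /K S_INR; ring.
have Ej2 : INR j.+2 = (K + 1)%R by rewrite /K !S_INR; ring.
rewrite Ej Ej2 in Hb.
have Kpos : (50 < eps * K)%R.
  have h : (50 / eps < K)%R by lra.
  have := Rmult_lt_compat_l eps _ _ epos h.
  by have -> : (eps * (50 / eps) = 50)%R by field; lra.
have sq : (sqrt N <= N)%R.
  have s0 := sqrt_pos N; have ss := sqrt_sqrt N ltac:(lra). nra.
have KN : (K <= eps / 2 * N)%R.
  have : (eps / 2 * sqrt N <= eps / 2 * N)%R by apply: Rmult_le_compat_l; lra.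
  lra.
have K0 : (0 <= K)%R by apply: pos_INR.
have NK0 : (0 <= N * K)%R by apply: Rmult_le_pos; lra.
have KK0 : (0 <= K * K)%R by apply: Rmult_le_pos; lra.
have p1 := Rmult_le_pos _ _ (ltac:(lra) : (0 <= eps * K - 50)%R) NK0.
have p2 := Rmult_le_pos _ _ (ltac:(lra) : (0 <= eps / 2 * N - K)%R) KK0.
have F1 : (50 * (N * K) <= eps * K * (N * K))%R by nra.
have F2 : (K * (K * K) <= eps / 2 * N * (K * K))%R by nra.
have K1 : (1 <= K)%R by rewrite /K S_INR; have := pos_INR j; lra.
have p3 := Rmult_le_pos _ _ (ltac:(lra) : (0 <= N)%R) (ltac:(lra) : (0 <= K - 1)%R).
have NKpos : (N <= N * K)%R by nra.
nra.
Qed.
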